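(* Let $\mathcal G=(N,\Sigma,S,P)$ be a normalized spine grammar with spine direction $d$. Then $\pi(\mathcal F(\mathcal S(\mathcal G))_S)=T(\mathcal G)$, where $\pi$ is the relabeling with $\pi(\alpha_n)=\alpha$ and $\pi\bigl(\tfrac{\sigma}{n_1\ n_2}\bigr)=\sigma$ for all $\alpha\in\Sigma_0$, $\sigma\in\Sigma_2$, $n,n_1,n_2\in N$.
   Context: sCFTG/spine grammar: $\mathcal G=(N,\Sigma,S,P)$, $N=N_0\cup N_1$ (nullary/unary nonterminals), terminals $\Sigma=\Sigma_0\cup\Sigma_2$, $S\in N_0$; productions rewrite nullary nonterminals to trees and unary nonterminals to contexts (trees with one hole $\Box$); $T(\mathcal G)$ is the set of terminal trees derivable from $S$. Spine direction $d:\Sigma_2\to\{1,2\}$: in every production for a unary nonterminal, the path from the root to $\Box$ passes from each $\sigma\in\Sigma_2$ on it into child $d(\sigma)$. Normalized: every production is of the form $n\to\alpha$ or $n\to b(\alpha)$ ($n\in N_0$, $b\in N_1$, $\alpha\in\Sigma_0$), $n\to b_1(b_2(\Box))$ ($b_1,b_2\in N_1$), or $n\to\sigma(\Box,a)$ / $n\to\sigma(a,\Box)$ ($\sigma\in\Sigma_2$, $a\in N_0\setminus\{S\}$); and for each $n\in N_0$ no tree derivable from $n$ by one step followed by steps using only productions for unary nonterminals contains $n$. Notation: $n_g=(n,g)\in N^2$, $\alpha_n=(\alpha,n)\in\Sigma_0\times N$, $\frac{\sigma}{n_1\ n_2}=(\sigma,n_1,n_2)\in\Sigma_2\times N^2$.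 Spines: $\mathcal S(\mathcal G)=L(\mathcal G')$ for the CFG $\mathcal G'$ with nonterminals $\{\top\}\cup N^2$ ($\top\notin N$), start $\top$, terminals $(\Sigma_0\times N)\cup(\Sigma_2\times N^2)$ and productions: $\top\to\alpha_n$ for each $(n\to\alpha)\in P$; $\top\to\alpha_n\,b_n$ for each $(n\to b(\alpha))\in P$; for all $g\in N$: $n_g\to b'_g\,b_g$ for each $(n\to b(b'(\Box)))\in P$; $n_g\to\frac{\sigma}{g\ n'}$ for each $(n\to\sigma(\Box,n'))\in P$; $n_g\to\frac{\sigma}{n'\ g}$ for each $(n\to\sigma(n',\Box))\in P$. Reassembly: let $\mathrm{gen}(\alpha_n)=n$ and $\mathrm{gen}(\frac{\sigma}{n_1\ n_2})=n_{d(\sigma)}$. For a set $T$ of trees with binary symbols in $\Sigma_2\times N^2$ and leaves in $\Sigma_0\times N$, let $T_n=\{t\in T\mid\mathrm{gen}(\text{root label of }t)=n\}$. For $w\in(\Sigma_0\times N)(\Sigma_2\times N^2)^*$ define $\mathrm{attach}_T(\alpha_n)=\{\alpha_n\}$ and $\mathrm{attach}_T(w\frac{\sigma}{n_1\ n_2})=\{\frac{\sigma}{n_1\ n_2}(t_1,t_2)\mid t_{d(\sigma)}\in\mathrm{attach}_T(w),\ t_{3-d(\sigma)}\in T_{n_{3-d(\sigma)}}\}$. For a language $L\subseteq(\Sigma_0\times N)(\Sigma_2\times N^2)^*$, $\mathcal F(L)$ is the smallest tree language $\mathcal F$ with $\mathrm{attach}_{\mathcal F}(w)\subseteq\mathcal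 F$ for all $w\in L$, and $\mathcal F(L)_S=\{t\in\mathcal F(L)\mid\mathrm{gen}(\text{root label of }t)=S\}$. *)

(* Defs.v *)
From Stdlib Require Import List.
Import ListNotations.
Set Implicit Arguments.

Section Spine.
Variables (N Sig0 Sig2 : Type).

Inductive tree : Type :=
| Leaf : Sig0 -> tree
| Node : Sig2 -> tree -> tree -> tree.

(* Right-hand sides / sentential forms: trees over Sigma u N u {Box};
   nullary nonterminals are leaves, unary nonterminals have one child. *)
Inductive rtree : Type :=
| RLeaf : Sig0 -> rtree
| RNode : Sig2 -> rtree -> rtree -> rtree
| RNt0  : N -> rtree
| RNt1  : N -> rtree -> rtree
| RHole : rtree.

Fixpoint embed (t : tree) : rtree :=
  match t with
  | Leaf a => RLeaf a
  | Node s l r => RNode s (embed l) (embed r)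
  end.

Fixpoint holes (r : rtree) : nat :=
  match r with
  | RLeaf _ => 0
  | RNode _ l r => holes l + holes r
  | RNt0 _ => 0
  | RNt1 _ t => holes t
  | RHole => 1
  end.

Fixpoint subst_hole (r u : rtree) : rtree :=
  match r with
  | RLeaf a => RLeaf a
  | RNode s l r' => RNode s (subst_hole l u) (subst_hole r' u)
  | RNt0 n => RNt0 n
  | RNt1 n t => RNt1 n (subst_hole t u)
  | RHole => u
  end.

Fixpoint occurs (n : N) (r : rtree) : Prop :=
  match r with
  | RLeaf _ => False
  | RNode _ l r' => occurs n l \/ occurs n r'
  | RNt0 m => m = n
  | RNt1 m t => m = n \/ occurs n t
  | RHole => False
  end.

Record grammar : Type := Grammar {
  unary : N -> bool;               (* true: n in N1, false: n in N0 *)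
  start : N;
  prods : list (N * rtree)
}.

Variable G : grammar.

Fixpoint arity_ok (r : rtree) : Prop :=
  match r with
  | RLeaf _ => True
  | RNode _ l r' => arity_ok l /\ arity_ok r'
  | RNt0 m => unary G m = false
  | RNt1 m t => unary G m = true /\ arity_ok t
  | RHole => True
  end.

Definition is_sCFTG : Prop :=
  unary G (start G) = false /\
  forall n r, In (n, r) (prods G) ->
    arity_ok r /\ holes r = (if unary G n then 1 else 0).

Inductive dir : Type := D1 | D2.

Fixpoint spine_path (d : Sig2 -> dir) (r : rtree) : Prop :=
  match r with
  | RLeaf _ => True
  | RNode s l r' =>
      (holes l > 0 -> d s = D1) /\ (holes r' > 0 -> d s = D2) /\
      spine_path d l /\ spine_path d r'
  | RNt0 _ => True
  | RNt1 _ t => spine_path d t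
  | RHole => True
  end.

Definition spine_direction (d : Sig2 -> dir) : Prop :=
  forall n r, In (n, r) (prods G) -> unary G n = true -> spine_path d r.

Inductive step (Q : N -> rtree -> Prop) : rtree -> rtree -> Prop :=
| st_nt0 n r : unary G n = false -> Q n r -> step Q (RNt0 n) r
| st_nt1 n r t : unary G n = true -> Q n r -> step Q (RNt1 n t) (subst_hole r t)
| st_node_l s l l' r : step Q l l' -> step Q (RNode s l r) (RNode s l' r)
| st_node_r s l r r' : step Q r r' -> step Q (RNode s l r) (RNode s l r')
| st_arg n t t' : step Q t t' -> step Q (RNt1 n t) (RNt1 n t').

Inductive star (A : Type) (R : A -> A -> Prop) : A -> A -> Prop :=
| star_refl x : star R x x
| star_step x y z : R x y -> star R y z -> star R x z.

Definition allP (n : N) (r : rtree) : Prop := In (n, r) (prods G).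
Definition unaryP (n : N) (r : rtree) : Prop := unary G n = true /\ In (n, r) (prods G).

Definition lang (t : tree) : Prop := star (step allP) (RNt0 (start G)) (embed t).

Definition normal_form (n : N) (r : rtree) : Prop :=
  (unary G n = false /\ exists a, r = RLeaf a) \/
  (unary G n = false /\ exists b a, unary G b = true /\ r = RNt1 b (RLeaf a)) \/
  (exists b1 b2, unary G b1 = true /\ unary G b2 = true /\ r = RNt1 b1 (RNt1 b2 RHole)) \/
  (exists s a, unary G a = false /\ a <> start G /\ r = RNode s RHole (RNt0 a)) \/
  (exists s a, unary G a = false /\ a <> start G /\ r = RNode s (RNt0 a) RHole).

Definition normalized : Prop :=
  (forall n r, In (n, r) (prods G) -> normal_form n r) /\
  (forall n t1 t2, unary G n = false ->
     step allP (RNt0 n) t1 -> star (step unaryP) t1 t2 -> ~ occurs n t2).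

Inductive sym : Type :=
| SLeaf : Sig0 -> N -> sym
| SBin  : Sig2 -> N -> N -> sym.

(* nonterminals {top} u N^2 : None = top, Some (n, g) = n_g *)
Definition cnt := option (N * N).

Definition spine_prod (A : cnt) (rhs : list (sym + cnt)) : Prop :=
  match A with
  | None =>
      (exists n a, In (n, RLeaf a) (prods G) /\ rhs = [inl (SLeaf a n)]) \/
      (exists n b a, In (n, RNt1 b (RLeaf a)) (prods G) /\
                     rhs = [inl (SLeaf a n); inr (Some (b, n))])
  | Some (n, g) =>
      (exists b b', In (n, RNt1 b (RNt1 b' RHole)) (prods G) /\
                    rhs = [inr (Some (b', g)); inr (Some (b, g))]) \/
      (exists s n', In (n, RNode s RHole (RNt0 n')) (prods G) /\
                    rhs = [inl (SBin s g n')]) \/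
      (exists s n', In (n, RNode s (RNt0 n') RHole) (prods G) /\
                    rhs = [inl (SBin s n' g)])
  end.

Inductive cfg_step : list (sym + cnt) -> list (sym + cnt) -> Prop :=
| cstep u v A alpha : spine_prod A alpha ->
    cfg_step (u ++ [inr A] ++ v) (u ++ alpha ++ v).

Definition spines (w : list sym) : Prop :=
  star cfg_step [inr None] (map inl w).

Inductive stree : Type :=
| SL : Sig0 -> N -> stree
| SN : Sig2 -> N -> N -> stree -> stree -> stree.

Variable d : Sig2 -> dir.

Definition gen (t : stree) : N :=
  match t with
  | SL _ n => n
  | SN s n1 n2 _ _ => match d s with D1 => n1 | D2 => n2 end
  end.

Inductive attach (T : stree -> Prop) : list sym -> stree -> Prop :=
| at_leaf a n : attach T [SLeaf a n] (SL a n)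
| at_bin1 w s n1 n2 t1 t2 : d s = D1 ->
    attach T w t1 -> T t2 -> gen t2 = n2 ->
    attach T (w ++ [SBin s n1 n2]) (SN s n1 n2 t1 t2)
| at_bin2 w s n1 n2 t1 t2 : d s = D2 ->
    attach T w t2 -> T t1 -> gen t1 = n1 ->
    attach T (w ++ [SBin s n1 n2]) (SN s n1 n2 t1 t2).

(* F(L): the smallest tree language F with attach_F(w) included in F for all w in L *)
Definition reassemble (L : list sym -> Prop) (t : stree) : Prop :=
  forall F : stree -> Prop,
    (forall w u, L w -> attach F w u -> F u) -> F t.

Fixpoint relabel (t : stree) : tree :=
  match t with
  | SL a _ => Leaf a
  | SN s _ _ l r => Node s (relabel l) (relabel r)
  end.
End Spine.

Definition finite_type (X : Type) : Prop := exists l : list X, forall x, In x l.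

(* Main.v *)
Require Import Defs.
From Stdlib Require Import List Arith Lia.
Import ListNotations.

#[local] Arguments Leaf {Sig0 Sig2}.
#[local] Arguments Node {Sig0 Sig2}.
#[local] Arguments RLeaf {N Sig0 Sig2}.
#[local] Arguments RNode {N Sig0 Sig2}.
#[local] Arguments RNt0 {N Sig0 Sig2}.
#[local] Arguments RNt1 {N Sig0 Sig2}.
#[local] Arguments RHole {N Sig0 Sig2}.
#[local] Arguments SLeaf {N Sig0 Sig2}.
#[local] Arguments SBin {N Sig0 Sig2}.
#[local] Arguments SL {N Sig0 Sig2}.
#[local] Arguments SN {N Sig0 Sig2}.
#[local] Arguments star_refl {A R}.
#[local] Arguments embed {N Sig0 Sig2}.
#[local] Arguments star_step {A R}.

Inductive Der {N Sig0 Sig2} (G : grammar N Sig0 Sig2) : rtree N Sig0 Sig2 -> tree Sig0 Sig2 -> Prop :=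
| der_leaf a : Der G (RLeaf a) (Leaf a)
| der_node s l r tl tr : Der G l tl -> Der G r tr -> Der G (RNode s l r) (Node s tl tr)
| der_nt0 n r t : unary G n = false -> In (n, r) (prods G) -> Der G r t -> Der G (RNt0 n) t
| der_nt1 n r x t : unary G n = true -> In (n, r) (prods G) -> Der G (subst_hole r x) t -> Der G (RNt1 n x) t.

Inductive DerN {N Sig0 Sig2} (G : grammar N Sig0 Sig2) : nat -> rtree N Sig0 Sig2 -> tree Sig0 Sig2 -> Prop :=
| dern_leaf a : DerN G 0 (RLeaf a) (Leaf a)
| dern_node h1 h2 s l r tl tr : DerN G h1 l tl -> DerN G h2 r tr -> DerN G (S (max h1 h2)) (RNode s l r) (Node s tl tr)
| dern_nt0 h n r t : unary G n = false -> In (n, r) (prods G) -> DerN G h r t -> DerN G (S h) (RNt0 n) t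
| dern_nt1 h n r x t : unary G n = true -> In (n, r) (prods G) -> DerN G h (subst_hole r x) t -> DerN G (S h) (RNt1 n x) t.

Lemma Der_DerN {N Sig0 Sig2} (G : grammar N Sig0 Sig2) x t : Der G x t -> exists h, DerN G h x t.
Proof.
  induction 1.
  - eexists; constructor.
  - destruct IHDer1, IHDer2; eexists; econstructor; eauto.
  - destruct IHDer; eexists; econstructor; eauto.
  - destruct IHDer; eexists; econstructor; eauto.
Qed.

Lemma DerN_Der {N Sig0 Sig2} (G : grammar N Sig0 Sig2) h x t : DerN G h x t -> Der G x t.
Proof. induction 1; econstructor; eauto. Qed.

Lemma star_trans {A} (R : A -> A -> Prop) x y z : star R x y -> star R y z -> star R x z.
Proof. induction 1; intros; auto. econstructor; eauto. Qed.

Lemma star_map {A B} (R : A -> A -> Prop) (R' : B -> B -> Prop) (f : A -> B) :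
  (forall x y, R x y -> R' (f x) (f y)) -> forall x y, star R x y -> star R' (f x) (f y).
Proof. intros Hf x y H; induction H; [constructor| econstructor; eauto]. Qed.

Lemma Der_star {N Sig0 Sig2} (G : grammar N Sig0 Sig2) x t : Der G x t -> star (step G (allP G)) x (embed t).
Proof.
  induction 1; simpl.
  - constructor.
  - apply star_trans with (RNode s (embed tl) r).
    + apply (star_map (step G (allP G)) (step G (allP G)) (fun z => RNode s z r)); auto. intros; now constructor.
    + apply (star_map (step G (allP G)) (step G (allP G)) (fun z => RNode s (embed tl) z)); auto. intros; now constructor.
  - econstructor; [constructor; eauto | auto].
  - econstructor; [constructor; eauto | auto].
Qed.

Lemma subst_assoc {N Sig0 Sig2} (q r x : rtree N Sig0 Sig2) :
  subst_hole q (subst_hole r x) = subst_hole (subst_hole q r) x.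
Proof. induction q; simpl; congruence. Qed.

Lemma Der_subst {N Sig0 Sig2} (G : grammar N Sig0 Sig2) x x' :
  (forall T, Der G x' T -> Der G x T) ->
  forall y T, Der G y T -> forall r, y = subst_hole r x' -> Der G (subst_hole r x) T.
Proof.
  intros Hx y T H; induction H; intros r0 E; destruct r0; simpl in E; try discriminate;
    try (simpl; apply Hx; rewrite <- E; econstructor; eauto; fail).
  - inversion E; subst; constructor.
  - inversion E; subst; simpl; constructor; auto.
  - inversion E; subst; simpl; econstructor; eauto.
  - inversion E; subst; simpl; econstructor; eauto.
    rewrite subst_assoc. apply IHDer. now rewrite subst_assoc.
Qed.

Lemma Der_embed {N Sig0 Sig2} (G : grammar N Sig0 Sig2) t : Der G (embed t) t.
Proof. induction t; simpl; constructor; auto. Qed.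

Lemma step_back {N Sig0 Sig2} (G : grammar N Sig0 Sig2) x y : step G (allP G) x y -> forall T, Der G y T -> Der G x T.
Proof.
  induction 1; intros T HT.
  - econstructor; eauto.
  - econstructor; eauto.
  - inversion HT; subst; constructor; auto.
  - inversion HT; subst; constructor; auto.
  - inversion HT; subst. econstructor; eauto.
    eapply Der_subst; eauto.
Qed.

Lemma star_Der {N Sig0 Sig2} (G : grammar N Sig0 Sig2) x t : star (step G (allP G)) x (embed t) -> Der G x t.
Proof.
  remember (embed t) as e. induction 1; subst.
  - apply Der_embed.
  - eapply step_back; eauto.
Qed.

Inductive SDer {N Sig0 Sig2} (G : grammar N Sig0 Sig2) : list (sym N Sig0 Sig2 + cnt N) -> list (sym N Sig0 Sig2) -> Prop :=
| sd_nil : SDer G [] []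
| sd_t x u w : SDer G u w -> SDer G (inl x :: u) (x :: w)
| sd_nt A alpha u w : spine_prod G A alpha -> SDer G (alpha ++ u) w -> SDer G (inr A :: u) w.

Lemma SDer_map {N Sig0 Sig2} (G : grammar N Sig0 Sig2) w : SDer G (map inl w) w.
Proof. induction w; simpl; constructor; auto. Qed.

Lemma SDer_back {N Sig0 Sig2} (G : grammar N Sig0 Sig2) A alpha v :
  spine_prod G A alpha ->
  forall z w, SDer G z w -> forall u, z = u ++ alpha ++ v -> SDer G (u ++ [inr A] ++ v) w.
Proof.
  intros HA z w H; induction H; intros u0 E.
  - destruct u0; simpl in *; [|discriminate]. econstructor; eauto. rewrite <- E; constructor.
  - destruct u0 as [|y u0]; simpl in *.
    + econstructor; eauto. rewrite <- E; constructor; auto.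
    + inversion E; subst. constructor. auto.
  - destruct u0 as [|y u0]; simpl in *.
    + apply sd_nt with alpha; auto. rewrite <- E. econstructor; eauto.
    + inversion E; subst. econstructor; eauto. rewrite app_assoc. apply IHSDer. now rewrite app_assoc.
Qed.

Lemma spines_SDer {N Sig0 Sig2} (G : grammar N Sig0 Sig2) w : spines G w -> SDer G [inr None] w.
Proof.
  unfold spines. remember (map inl w) as e. induction 1; subst.
  - apply SDer_map.
  - destruct H. eapply SDer_back; eauto.
Qed.

Lemma star_app_l {N Sig0 Sig2} (G : grammar N Sig0 Sig2) p x y :
  star (cfg_step G) x y -> star (cfg_step G) (p ++ x) (p ++ y).
Proof.
  induction 1; [constructor|]. econstructor; [|eauto].
  destruct H. replace (p ++ u ++ [inr A] ++ v) with ((p ++ u) ++ [inr A] ++ v) by (now rewrite <- app_assoc).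
  replace (p ++ u ++ alpha ++ v) with ((p ++ u) ++ alpha ++ v) by (now rewrite <- app_assoc). constructor; auto.
Qed.

Lemma SDer_spines {N Sig0 Sig2} (G : grammar N Sig0 Sig2) x w : SDer G x w -> star (cfg_step G) x (map inl w).
Proof.
  induction 1; simpl.
  - constructor.
  - apply (star_app_l G [inl x]); auto.
  - econstructor; [|eauto]. apply (cstep G [] u A alpha H).
Qed.

Lemma SDer_app {N Sig0 Sig2} (G : grammar N Sig0 Sig2) u1 u2 w1 w2 :
  SDer G u1 w1 -> SDer G u2 w2 -> SDer G (u1 ++ u2) (w1 ++ w2).
Proof.
  induction 1; intros; simpl; auto.
  - constructor; auto.
  - econstructor; eauto. rewrite app_assoc; auto.
Qed.

Lemma SDer_app_inv {N Sig0 Sig2} (G : grammar N Sig0 Sig2) z w : SDer G z w ->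
  forall u1 u2, z = u1 ++ u2 -> exists w1 w2, w = w1 ++ w2 /\ SDer G u1 w1 /\ SDer G u2 w2.
Proof.
  induction 1; intros u1 u2 E.
  - destruct u1; [|discriminate]; destruct u2; [|discriminate].
    exists [], []; repeat split; constructor.
  - destruct u1 as [|y u1]; simpl in E.
    + exists [], (x :: w); subst; repeat split; [constructor| constructor; auto].
    + inversion E; subst. destruct (IHSDer u1 u2 eq_refl) as (w1 & w2 & -> & H1 & H2).
      exists (x :: w1), w2; repeat split; auto. constructor; auto.
  - destruct u1 as [|y u1]; simpl in E.
    + exists [], w; subst; repeat split; [constructor|]. econstructor; eauto.
    + inversion E; subst. destruct (IHSDer (alpha ++ u1) u2 (app_assoc _ _ _)) as (w1 & w2 & -> & H1 & H2).
      exists w1, w2; repeat split; auto. econstructor; eauto.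
Qed.

Lemma spine_prod_ne {N Sig0 Sig2} (G : grammar N Sig0 Sig2) A alpha : spine_prod G A alpha -> 1 <= length alpha.
Proof.
  destruct A as [[n g]|]; simpl; intros H;
  repeat match goal with H : _ \/ _ |- _ => destruct H | H : exists _, _ |- _ => destruct H | H : _ /\ _ |- _ => destruct H end;
  subst; simpl; lia.
Qed.

Lemma SDer_len {N Sig0 Sig2} (G : grammar N Sig0 Sig2) u w : SDer G u w -> length u <= length w.
Proof.
  induction 1; simpl; try lia. apply spine_prod_ne in H. rewrite length_app in IHSDer. lia.
Qed.

Lemma SDer_inl_inv {N Sig0 Sig2} (G : grammar N Sig0 Sig2) x u w : SDer G (inl x :: u) w -> exists w', w = x :: w' /\ SDer G u w'.
Proof. intros H; inversion H; subst; eauto. Qed.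

Lemma SDer_nil_inv {N Sig0 Sig2} (G : grammar N Sig0 Sig2) w : SDer G [] w -> w = [].
Proof. intros H; inversion H; auto. Qed.

Inductive CD {N Sig0 Sig2} (G : grammar N Sig0 Sig2) : N -> N -> list (sym N Sig0 Sig2) -> Prop :=
| cd_comp b b1 b2 g v1 v2 : In (b, RNt1 b1 (RNt1 b2 RHole)) (prods G) -> CD G b2 g v1 -> CD G b1 g v2 -> CD G b g (v1 ++ v2)
| cd_l b s n' g : In (b, RNode s RHole (RNt0 n')) (prods G) -> CD G b g [SBin s g n']
| cd_r b s n' g : In (b, RNode s (RNt0 n') RHole) (prods G) -> CD G b g [SBin s n' g].

Lemma CD_SDer {N Sig0 Sig2} (G : grammar N Sig0 Sig2) b g v : CD G b g v -> SDer G [inr (Some (b, g))] v.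
Proof.
  induction 1.
  - econstructor. { left. exists b1, b2. split; [eauto|reflexivity]. }
    rewrite app_nil_r. apply (SDer_app G [_] [_]); auto.
  - econstructor. { right; left. exists s, n'. split; [eauto|reflexivity]. }
    repeat constructor.
  - econstructor. { right; right. exists s, n'. split; [eauto|reflexivity]. }
    repeat constructor.
Qed.

Lemma SDer_CD {N Sig0 Sig2} (G : grammar N Sig0 Sig2) k : forall b g v, length v <= k -> SDer G [inr (Some (b, g))] v -> CD G b g v.
Proof.
  induction k as [k IH] using lt_wf_ind. intros b g v Hk H.
  inversion H; subst. rewrite app_nil_r in H4. simpl in H2.
  destruct H2 as [(b1 & b2 & Hin & ->) | [(s & n' & Hin & ->) | (s & n' & Hin & ->)]].
  - destruct (SDer_app_inv G _ _ H4 [_] [_] eq_refl) as (w1 & w2 & -> & H1 & H2).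
    pose proof (SDer_len G _ _ H1). pose proof (SDer_len G _ _ H2). simpl in *.
    rewrite length_app in Hk.
    econstructor; eauto.
    + apply (IH (length w1)); auto; lia.
    + apply (IH (length w2)); auto; lia.
  - destruct (SDer_inl_inv G _ _ _ H4) as (w' & -> & Hw). apply SDer_nil_inv in Hw; subst. constructor; auto.
  - destruct (SDer_inl_inv G _ _ _ H4) as (w' & -> & Hw). apply SDer_nil_inv in Hw; subst. constructor; auto.
Qed.

Lemma spines_top {N Sig0 Sig2} (G : grammar N Sig0 Sig2) w : spines G w ->
  (exists n a, In (n, RLeaf a) (prods G) /\ w = [SLeaf a n]) \/
  (exists n b a v, In (n, RNt1 b (RLeaf a)) (prods G) /\ CD G b n v /\ w = SLeaf a n :: v).
Proof.
  intros H. apply spines_SDer in H. inversion H; subst. rewrite app_nil_r in H4. simpl in H2.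
  destruct H2 as [(n & a & Hin & ->) | (n & b & a & Hin & ->)].
  - left. destruct (SDer_inl_inv G _ _ _ H4) as (w' & -> & Hw). apply SDer_nil_inv in Hw; subst. eauto.
  - right. destruct (SDer_inl_inv G _ _ _ H4) as (w' & -> & Hw).
    exists n, b, a, w'; repeat split; auto. eapply SDer_CD; eauto.
Qed.

Lemma top_spines {N Sig0 Sig2} (G : grammar N Sig0 Sig2) n b a v :
  In (n, RNt1 b (RLeaf a)) (prods G) -> CD G b n v -> spines G (SLeaf a n :: v).
Proof.
  intros Hin Hv. apply SDer_spines. econstructor. { right. exists n, b, a. split; eauto. }
  simpl. constructor. now apply CD_SDer.
Qed.

Lemma top_spines0 {N Sig0 Sig2} (G : grammar N Sig0 Sig2) n a :
  In (n, RLeaf a) (prods G) -> spines G [SLeaf a n].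
Proof.
  intros Hin. apply SDer_spines. econstructor. { left. exists n, a. split; eauto. }
  simpl. repeat constructor.
Qed.

Inductive Ext {N Sig0 Sig2} (d : Sig2 -> dir) (F : stree N Sig0 Sig2 -> Prop) (t0 : stree N Sig0 Sig2) :
  list (sym N Sig0 Sig2) -> stree N Sig0 Sig2 -> Prop :=
| ext_nil : Ext d F t0 [] t0
| ext_1 v s n1 n2 t1 t2 : d s = D1 -> Ext d F t0 v t1 -> F t2 -> gen d t2 = n2 ->
    Ext d F t0 (v ++ [SBin s n1 n2]) (SN s n1 n2 t1 t2)
| ext_2 v s n1 n2 t1 t2 : d s = D2 -> Ext d F t0 v t2 -> F t1 -> gen d t1 = n1 ->
    Ext d F t0 (v ++ [SBin s n1 n2]) (SN s n1 n2 t1 t2).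

Lemma Ext_nil_inv {N Sig0 Sig2} d F (t0 u : stree N Sig0 Sig2) : Ext d F t0 [] u -> u = t0.
Proof. intros H; inversion H; auto; exfalso; eapply app_cons_not_nil; eauto. Qed.

Lemma Ext_snoc_inv {N Sig0 Sig2} d F (t0 u : stree N Sig0 Sig2) w : Ext d F t0 w u -> forall l x, w = l ++ [x] ->
  exists s n1 n2 t1 t2, x = SBin s n1 n2 /\ u = SN s n1 n2 t1 t2 /\
   ((d s = D1 /\ Ext d F t0 l t1 /\ F t2 /\ gen d t2 = n2) \/
    (d s = D2 /\ Ext d F t0 l t2 /\ F t1 /\ gen d t1 = n1)).
Proof.
  intros H l x E; destruct H.
  - exfalso; eapply app_cons_not_nil; eauto.
  - apply app_inj_tail in E as [-> <-]. do 5 eexists; split; [reflexivity|split;[reflexivity|]]. left; auto.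
  - apply app_inj_tail in E as [-> <-]. do 5 eexists; split; [reflexivity|split;[reflexivity|]]. right; auto.
Qed.

Lemma Ext_app {N Sig0 Sig2} d F (t0 t1 u : stree N Sig0 Sig2) v1 v2 :
  Ext d F t0 v1 t1 -> Ext d F t1 v2 u -> Ext d F t0 (v1 ++ v2) u.
Proof.
  intros H1 H2; induction H2.
  - now rewrite app_nil_r.
  - rewrite app_assoc. apply ext_1; auto.
  - rewrite app_assoc. apply ext_2; auto.
Qed.

Lemma Ext_app_inv {N Sig0 Sig2} d F (t0 u : stree N Sig0 Sig2) v1 v2 :
  Ext d F t0 (v1 ++ v2) u -> exists t1, Ext d F t0 v1 t1 /\ Ext d F t1 v2 u.
Proof.
  revert u; induction v2 as [|x l IH] using rev_ind; intros u H.
  - rewrite app_nil_r in H. exists u; split; auto. constructor.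
  - rewrite app_assoc in H.
    destruct (Ext_snoc_inv d F _ _ _ H _ _ eq_refl) as (s & n1 & n2 & t1 & t2 & -> & -> & [(Hd & He & HF & Hg) | (Hd & He & HF & Hg)]).
    + destruct (IH _ He) as (tm & H1 & H2). exists tm; split; auto. apply ext_1; auto.
    + destruct (IH _ He) as (tm & H1 & H2). exists tm; split; auto. apply ext_2; auto.
Qed.

Lemma attach_Ext {N Sig0 Sig2} d F w (u : stree N Sig0 Sig2) : attach d F w u ->
  forall a n v, w = SLeaf a n :: v -> Ext d F (SL a n) v u.
Proof.
  induction 1; intros a0 n0 v E.
  - inversion E; subst; constructor.
  - destruct w as [|y w]; [discriminate|]. inversion E; subst. apply ext_1; eauto.
  - destruct w as [|y w]; [discriminate|]. inversion E; subst. apply ext_2; eauto.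
Qed.

Lemma Ext_attach {N Sig0 Sig2} d F a n v (u : stree N Sig0 Sig2) : Ext d F (SL a n) v u -> attach d F (SLeaf a n :: v) u.
Proof.
  induction 1.
  - constructor.
  - change (SLeaf a n :: v ++ [SBin s n1 n2]) with ((SLeaf a n :: v) ++ [SBin s n1 n2]). apply at_bin1; auto.
  - change (SLeaf a n :: v ++ [SBin s n1 n2]) with ((SLeaf a n :: v) ++ [SBin s n1 n2]). apply at_bin2; auto.
Qed.

Lemma attach_mono {N Sig0 Sig2} d (F F' : stree N Sig0 Sig2 -> Prop) w u :
  (forall t, F t -> F' t) -> attach d F w u -> attach d F' w u.
Proof. intros HF; induction 1; [constructor | apply at_bin1 | apply at_bin2]; eauto. Qed.

Lemma unary_of_holes {N Sig0 Sig2} (G : grammar N Sig0 Sig2) n r :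
  is_sCFTG G -> In (n, r) (prods G) -> unary G n = (match holes r with 0 => false | _ => true end).
Proof.
  intros [_ H] Hin. destruct (H n r Hin) as [_ Hh]. destruct (unary G n); rewrite Hh; auto.
Qed.

Lemma CD_gen {N Sig0 Sig2} (G : grammar N Sig0 Sig2) d F b g v :
  is_sCFTG G -> spine_direction G d -> CD G b g v ->
  forall t0 u, Ext d F t0 v u -> gen d u = g.
Proof.
  intros HG Hd; induction 1; intros t0 u HE.
  - destruct (Ext_app_inv d F _ _ _ _ HE) as (t1 & HE1 & HE2). eauto.
  - pose proof (unary_of_holes G _ _ HG H) as Hu. simpl in Hu.
    pose proof (Hd _ _ H Hu) as Hp. simpl in Hp.
    destruct (Ext_snoc_inv d F _ _ _ HE [] _ eq_refl) as (s' & n1 & n2 & t1 & t2 & E & -> & [(Hs & _) | (Hs & _)]);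
      inversion E; subst; simpl.
    + now rewrite Hs.
    + destruct Hp as [Hp _]. rewrite Hp in Hs by lia. discriminate.
  - pose proof (unary_of_holes G _ _ HG H) as Hu. simpl in Hu.
    pose proof (Hd _ _ H Hu) as Hp. simpl in Hp.
    destruct (Ext_snoc_inv d F _ _ _ HE [] _ eq_refl) as (s' & n1 & n2 & t1 & t2 & E & -> & [(Hs & _) | (Hs & _)]);
      inversion E; subst; simpl.
    + destruct Hp as [_ [Hp _]]. rewrite Hp in Hs by lia. discriminate.
    + now rewrite Hs.
Qed.

Lemma CD_der {N Sig0 Sig2} (G : grammar N Sig0 Sig2) d F b g v :
  is_sCFTG G -> spine_direction G d ->
  (forall t, F t -> Der G (RNt0 (gen d t)) (relabel t)) -> CD G b g v ->
  forall t0 u, Ext d F t0 v u -> forall x, Der G x (relabel t0) -> Der G (RNt1 b x) (relabel u).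
Proof.
  intros HG Hd HF; induction 1; intros t0 u HE x Hx.
  - destruct (Ext_app_inv d F _ _ _ _ HE) as (t1 & HE1 & HE2).
    pose proof (unary_of_holes G _ _ HG H) as Hu. simpl in Hu.
    eapply der_nt1; [exact Hu | exact H | simpl; eauto].
  - pose proof (unary_of_holes G _ _ HG H) as Hu. simpl in Hu.
    pose proof (Hd _ _ H Hu) as Hp. simpl in Hp.
    destruct (Ext_snoc_inv d F _ _ _ HE [] _ eq_refl) as (s' & n1 & n2 & t1 & t2 & E & -> & [(Hs & He & HF2 & Hg) | (Hs & _)]);
      inversion E; subst; simpl.
    + apply Ext_nil_inv in He; subst. eapply der_nt1; [exact Hu | exact H | simpl; constructor; auto].
    + destruct Hp as [Hp _]. rewrite Hp in Hs by lia. discriminate.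
  - pose proof (unary_of_holes G _ _ HG H) as Hu. simpl in Hu.
    pose proof (Hd _ _ H Hu) as Hp. simpl in Hp.
    destruct (Ext_snoc_inv d F _ _ _ HE [] _ eq_refl) as (s' & n1 & n2 & t1 & t2 & E & -> & [(Hs & _) | (Hs & He & HF2 & Hg)]);
      inversion E; subst; simpl.
    + destruct Hp as [_ [Hp _]]. rewrite Hp in Hs by lia. discriminate.
    + apply Ext_nil_inv in He; subst. eapply der_nt1; [exact Hu | exact H | simpl; constructor; auto].
Qed.

Lemma R_closed {N Sig0 Sig2} (G : grammar N Sig0 Sig2) d w u :
  spines G w -> attach d (reassemble d (spines G)) w u -> reassemble d (spines G) u.
Proof.
  intros Hw Ha F HF. apply (HF w u Hw). eapply attach_mono; [|exact Ha].
  intros t Ht. apply Ht. exact HF.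
Qed.

Lemma back_main {N Sig0 Sig2} (G : grammar N Sig0 Sig2) d :
  is_sCFTG G -> spine_direction G d -> (forall n r, In (n, r) (prods G) -> normal_form G n r) ->
  forall h,
  (forall n T, DerN G h (RNt0 n) T -> exists u, reassemble d (spines G) u /\ gen d u = n /\ relabel u = T) /\
  (forall b x T g, DerN G h (RNt1 b x) T -> exists v T0 h0, h0 <= h /\ CD G b g v /\ DerN G h0 x T0 /\
      forall t0, relabel t0 = T0 -> exists u, Ext d (reassemble d (spines G)) t0 v u /\ relabel u = T).
Proof.
  intros HG Hd Hnf h. induction h as [h IH] using lt_wf_ind. split.
  - intros n T H. inversion H as [| | h' n0 r t Hu Hin Hr | ]; subst.
    pose proof (unary_of_holes G _ _ HG Hin) as Hh.
    destruct (Hnf _ _ Hin) as [(_ & a & ->) | [(_ & b & a & Hb & ->) | [(b1 & b2 & _ & _ & ->) | [(s & a & _ & _ & ->) | (s & a & _ & _ & ->)]]]];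
      simpl in Hh; try congruence.
    + inversion Hr; subst. exists (SL a n). split; [|split; reflexivity].
      apply R_closed with [SLeaf a n]; [apply top_spines0; auto| constructor].
    + destruct (proj2 (IH h' (Nat.lt_succ_diag_r _)) _ _ _ n Hr) as (v & T0 & h0 & _ & Hcd & HT0 & Hext).
      inversion HT0; subst.
      destruct (Hext (SL a n) eq_refl) as (u & Hue & Hur).
      exists u. split; [|split; auto].
      * apply R_closed with (SLeaf a n :: v); [apply (top_spines G n b a v); auto| apply Ext_attach; auto].
      * eapply CD_gen; eauto.
  - intros b x T g H. inversion H as [| | | h' n0 r x0 t Hu Hin Hr]; subst.
    pose proof (Hd _ _ Hin Hu) as Hp.
    destruct (Hnf _ _ Hin) as [(Hf & _) | [(Hf & _) | [(b1 & b2 & Hb1 & Hb2 & ->) | [(s & a & _ & _ & ->) | (s & a & _ & _ & ->)]]]];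
      try congruence; simpl in Hr, Hp.
    + destruct (proj2 (IH h' (Nat.lt_succ_diag_r _)) _ _ _ g Hr) as (v2 & T1 & h1 & Hh1 & Hcd2 & HT1 & Hext2).
      destruct (proj2 (IH h1 ltac:(lia)) _ _ _ g HT1) as (v1 & T0 & h0 & Hh0 & Hcd1 & HT0 & Hext1).
      exists (v1 ++ v2), T0, h0. split; [lia|]. split; [econstructor; eauto|]. split; auto.
      intros t0 Ht0. destruct (Hext1 t0 Ht0) as (u1 & Hu1 & Hr1).
      destruct (Hext2 u1 Hr1) as (u & Hu2 & Hr2). exists u; split; auto. eapply Ext_app; eauto.
    + inversion Hr as [| h1 h2 s' l r' tl tr H1 H2 | |]; subst.
      destruct (proj1 (IH h2 ltac:(lia)) _ _ H2) as (u2 & HR2 & Hg2 & Hr2).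
      exists [SBin s g a], tl, h1. split; [lia|]. split; [constructor; auto|]. split; auto.
      intros t0 Ht0. exists (SN s g a t0 u2). split.
      * apply (ext_1 d _ t0 [] s g a t0 u2); auto. { apply Hp; simpl; lia. } constructor.
      * simpl; congruence.
    + inversion Hr as [| h1 h2 s' l r' tl tr H1 H2 | |]; subst.
      destruct (proj1 (IH h1 ltac:(lia)) _ _ H1) as (u1 & HR1 & Hg1 & Hr1).
      exists [SBin s a g], tr, h2. split; [lia|]. split; [constructor; auto|]. split; auto.
      intros t0 Ht0. exists (SN s a g u1 t0). split.
      * apply (ext_2 d _ t0 [] s a g u1 t0); auto. { apply Hp; simpl; lia. } constructor.
      * simpl; congruence.
Qed.

Theorem theorem6p6 (N Sig0 Sig2 : Type)
  (HN : finite_type N) (HS0 : finite_type Sig0) (HS2 : finite_type Sig2)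
  (G : grammar N Sig0 Sig2) (d : Sig2 -> dir) :
  is_sCFTG G -> spine_direction G d -> normalized G ->
  forall t : tree Sig0 Sig2,
    (exists u : stree N Sig0 Sig2,
        reassemble d (spines G) u /\ gen d u = start G /\ relabel u = t)
    <-> lang G t.
Proof.
  intros HG Hd [Hnf _] t. split.
  - intros (u & HR & Hg & Ht). unfold lang. rewrite <- Hg, <- Ht. apply Der_star.
    apply (HR (fun u => Der G (RNt0 (gen d u)) (relabel u))).
    intros w u' Hw Ha. destruct (spines_top G w Hw) as [(n & a & Hin & ->) | (n & b & a & v & Hin & Hcd & ->)].
    + pose proof (attach_Ext d _ _ _ Ha a n [] eq_refl) as He. apply Ext_nil_inv in He; subst.
      pose proof (unary_of_holes G _ _ HG Hin) as Hu. simpl in *.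
      econstructor; eauto. constructor.
    + pose proof (attach_Ext d _ _ _ Ha a n v eq_refl) as He.
      pose proof (unary_of_holes G _ _ HG Hin) as Hu. simpl in Hu.
      rewrite (CD_gen G d _ b n v HG Hd Hcd _ _ He).
      eapply der_nt0; [exact Hu | exact Hin |].
      eapply (CD_der G d _ b n v HG Hd); [intros t1 Ht1; exact Ht1 | exact Hcd | exact He | constructor].
  - intros Hl. apply star_Der in Hl. apply Der_DerN in Hl as [h Hh].
    exact (proj1 (back_main G d HG Hd Hnf h) _ _ Hh).
Qed.
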